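(* Let $F$ be a finitely generated group whose commutator subgroup has infinite index in $F$, and let $G$ be an arbitrary group. Then the number of surjective homomorphisms $F\to G$ is divisible by the order $|G'|$ of the commutator subgroup of $G$.
   Context: Groups need not be finite; divisibility is understood in the sense of cardinal arithmetic: an infinite cardinal is divisible by every nonzero cardinal not exceeding it. *)

(* Defs.v *)
(* possibly infinite groups are [groupType]s from
   mathcomp/boot/monoid.v (carrier with a group law; the carrier is a
   choiceType, which is harmless classically). *)
From mathcomp Require Import all_boot.
From mathcomp Require Import monoid.

Set Implicit Arguments.
Unset Strict Implicit.
Unset Printing Implicit Defensive.

Definition is_subgroup (G : groupType) (H : G -> Prop) : Prop :=
  [/\ H one,
      forall x y, H x -> H y -> H (mul x y)
    & forall x, H x -> H (inv x)].

Definition generated (G : groupType) (S : G -> Prop) : G -> Prop :=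
  fun x => forall H : G -> Prop, is_subgroup H -> (forall s, S s -> H s) -> H x.

Definition derived (G : groupType) : G -> Prop :=
  generated (fun z : G => exists x y, z = commg x y).

Definition finitely_generated (G : groupType) : Prop :=
  exists s : seq G, forall x : G, generated (fun y => y \in s) x.

Definition finite_index (G : groupType) (H : G -> Prop) : Prop :=
  exists reps : seq G, forall x : G, exists2 r, r \in reps & H (mul (inv r) x).

Definition SurjHom (F G : groupType) : Type :=
  {f : F -> G | monoid_morphism f /\ (forall y : G, exists x : F, f x = y)}.

Definition DerivedSet (G : groupType) : Type := {x : G | derived x}.

(* Cardinal divisibility: |A| divides |B| iff |B| = |A| * |C| for some
   cardinal |C|, i.e. B is in bijection with A * C for some set C. *)
Definition card_divides (A B : Type) : Prop :=
  exists (C : Type) (f : A * C -> B), bijective f.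

(* Main.v *)
Require Import Defs.
From mathcomp Require Import all_boot.
From mathcomp Require Import monoid.
From Stdlib Require Import ZArith Lia Setoid Morphisms.
From Stdlib Require Import ClassicalEpsilon FunctionalExtensionality PropExtensionality ProofIrrelevance Classical.

Set Implicit Arguments.
Unset Strict Implicit.
Unset Printing Implicit Defensive.

Local Open Scope group_scope.



Section ZPow.
Variable G : groupType.
Implicit Types x y : G.

Definition zpow x (n : Z) : G :=
  if (0 <=? n)%Z then x ^+ Z.to_nat n else (x^-1) ^+ Z.to_nat (- n).

Lemma zpow0 x : zpow x 0 = 1.
Proof. by []. Qed.

Lemma zpow_nat x (k : nat) : zpow x (Z.of_nat k) = x ^+ k.
Proof.
rewrite /zpow; have -> : (0 <=? Z.of_nat k)%Z = true by apply/Z.leb_le; lia.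
by rewrite Nat2Z.id.
Qed.

Lemma zpowS x n : zpow x (Z.succ n) = zpow x n * x.
Proof.
rewrite /zpow.
case: (Z.leb_spec 0 n) => Hn.
  have -> : (0 <=? Z.succ n)%Z = true by apply/Z.leb_le; lia.
  have -> : Z.to_nat (Z.succ n) = (Z.to_nat n).+1 by lia.
  by rewrite expgSr.
case: (Z.leb_spec 0 (Z.succ n)) => Hn'.
  have -> : n = (-1)%Z by lia.
  by rewrite /= expg1 mulVg.
have -> : Z.to_nat (- n) = (Z.to_nat (- Z.succ n)).+1 by lia.
by rewrite expgSr mulgVK.
Qed.

Lemma zpowP x n : zpow x (Z.pred n) = zpow x n * x^-1.
Proof.
by rewrite -{2}(Z.succ_pred n) zpowS mulgK.
Qed.

Lemma zpow1 x : zpow x 1 = x.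
Proof. by rewrite -[1%Z]/(Z.succ 0) zpowS zpow0 mul1g. Qed.

Lemma zpowD x m n : zpow x (m + n) = zpow x m * zpow x n.
Proof.
induction n using Z.peano_ind.
- by rewrite Z.add_0_r zpow0 mulg1.
- by rewrite Z.add_succ_r !zpowS IHn mulgA.
- by rewrite Z.add_pred_r !zpowP IHn mulgA.
Qed.

Lemma zpowN x n : zpow x (- n) = (zpow x n)^-1.
Proof.
apply: (mulIg (zpow x n)); rewrite -zpowD mulVg.
by have -> : (- n + n = 0)%Z by lia.
Qed.

Lemma zpowM x m n : zpow x (m * n) = zpow (zpow x m) n.
Proof.
induction n using Z.peano_ind.
- by rewrite Z.mul_0_r.
- by rewrite Z.mul_succ_r zpowD zpowS IHn.
- have -> : (m * Z.pred n = m * n - m)%Z by lia.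
  by rewrite zpowD zpowN zpowP IHn.
Qed.

Lemma zpow1g n : zpow (1 : G) n = 1.
Proof.
induction n using Z.peano_ind.
- by [].
- by rewrite zpowS IHn mulg1.
- by rewrite zpowP IHn invg1 mulg1.
Qed.

End ZPow.

Section Hom.
Variables F G : groupType.
Variable f : F -> G.
Hypothesis hf : monoid_morphism f.

Lemma hom1 : f 1 = 1. Proof. exact: hf.1. Qed.
Lemma homM x y : f (x * y) = f x * f y. Proof. exact: hf.2. Qed.
Lemma homV x : f x^-1 = (f x)^-1.
Proof. by apply: (mulIg (f x)); rewrite -homM !mulVg hom1. Qed.
Lemma homJ x y : f (x ^ y) = f x ^ f y.
Proof. by rewrite /conjg !homM homV. Qed.
Lemma homR x y : f (commg x y) = commg (f x) (f y).
Proof. by rewrite /commg homM homV homJ. Qed.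
Lemma homX x n : f (x ^+ n) = f x ^+ n.
Proof. elim: n => [|n IH]; first by rewrite !expg0 hom1. by rewrite !expgS homM IH. Qed.
Lemma homZ x n : f (zpow x n) = zpow (f x) n.
Proof.
induction n using Z.peano_ind.
- by rewrite !zpow0 hom1.
- by rewrite !zpowS homM IHn.
- by rewrite !zpowP homM homV IHn.
Qed.
End Hom.



Section ModH.
Variable G : groupType.
Variable H : G -> Prop.
Hypothesis Hsub : is_subgroup H.
Hypothesis Hcomm : forall x y : G, H (commg x y).
#[local] Set Default Proof Using "Hsub Hcomm".

Lemma H1 : H 1. Proof. by case: Hsub. Qed.
Lemma HM x y : H x -> H y -> H (x * y). Proof. by case: Hsub => _ h _; apply: h. Qed.
Lemma HV x : H x -> H x^-1. Proof. by case: Hsub => _ _ h; apply: h. Qed.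
Lemma HVE x : H x^-1 -> H x. Proof. by move/HV; rewrite invgK. Qed.
Lemma HJ x y : H x -> H (x ^ y).
Proof. move=> hx; have -> : x ^ y = x * commg x y by rewrite /commg mulVKg. exact: HM. Qed.
Lemma Hrot x y : H (x * y) -> H (y * x).
Proof. by move=> /(HJ x); rewrite /conjg mulgA mulKg. Qed.

Definition eqH (x y : G) := H (x * y^-1).

Lemma eqH_refl x : eqH x x. Proof. by rewrite /eqH mulgV; exact: H1. Qed.
Lemma eqH_sym x y : eqH x y -> eqH y x.
Proof. by move=> /HV; rewrite /eqH invgM invgK. Qed.
Lemma eqH_trans x y z : eqH x y -> eqH y z -> eqH x z.
Proof.
move=> h1 h2; have := HM h1 h2; rewrite /eqH.
by have -> : x * y^-1 * (y * z^-1) = x * z^-1 by rewrite mulgA mulgVK.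
Qed.

Global Instance eqH_Equiv : Equivalence eqH.
Proof. split; [exact: eqH_refl | exact: eqH_sym | exact: eqH_trans]. Qed.

Global Instance eqH_mul : Proper (eqH ==> eqH ==> eqH) (@mul G).
Proof.
move=> x x' hx y y' hy; rewrite /eqH invgM.
have e : x * y * (y'^-1 * x'^-1) = x * (y * y'^-1) * x'^-1 by rewrite !mulgA.
rewrite e; apply: Hrot; rewrite mulgA; apply: HM => //.
by apply: Hrot.
Qed.

Global Instance eqH_inv : Proper (eqH ==> eqH) (@inv G).
Proof.
move=> x x' hx; rewrite /eqH invgK; apply: Hrot.
by have := HV hx; rewrite invgM invgK.
Qed.

Lemma eqH_comm x y : eqH (x * y) (y * x).
Proof.
rewrite /eqH invgM.
have := Hcomm x^-1 y^-1; rewrite /commg /conjg !invgK !mulgA.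
by [].
Qed.

Lemma eqH1 x : H x <-> eqH x 1.
Proof. by rewrite /eqH invg1 mulg1. Qed.

Global Instance eqH_zpow : Proper (eqH ==> eq ==> eqH) (@zpow G).
Proof.
move=> x y hxy n _ <-.
induction n using Z.peano_ind.
- rewrite !zpow0; reflexivity.
- rewrite !zpowS IHn hxy; reflexivity.
- rewrite !zpowP IHn hxy; reflexivity.
Qed.

Global Instance eqH_exp : Proper (eqH ==> eq ==> eqH) (@natexp G).
Proof.
move=> x y hxy n _ <-; elim: n => [|n IH]; first by rewrite !expg0; reflexivity.
rewrite !expgS IH hxy; reflexivity.
Qed.

Lemma eqH_expM x y n : eqH ((x * y) ^+ n) (x ^+ n * y ^+ n).
Proof.
elim: n => [|n IH]; first by rewrite !expg0 mulg1; reflexivity.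
rewrite !expgS IH.
rewrite -!mulgA (eqH_mul (eqH_refl x)); first reflexivity.
rewrite !mulgA (eqH_mul _ (eqH_refl _)); first reflexivity.
exact: eqH_comm.
Qed.

Lemma H_zpow x n : H x -> H (zpow x n).
Proof. move/eqH1=> hx; apply/eqH1; rewrite hx; by rewrite zpow1g; reflexivity. Qed.

Lemma H_exp x n : H x -> H (x ^+ n).
Proof. move/eqH1=> hx; apply/eqH1; rewrite hx; by rewrite expg1n; reflexivity. Qed.

End ModH.

Ltac setupH hs hc :=
  let E1 := fresh "E" in let E2 := fresh "E" in let E3 := fresh "E" in
  let E4 := fresh "E" in let E5 := fresh "E" in
  have E1 := eqH_Equiv hs hc; have E2 := eqH_mul hs hc;
  have E3 := eqH_inv hs hc; have E4 := eqH_zpow hs hc; have E5 := eqH_exp hs hc.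

Section Gen.
Variable G : groupType.

Lemma generated_mono (S S' : G -> Prop) x :
  (forall y, S y -> S' y) -> generated S x -> generated S' x.
Proof. move=> hS hx H hH hS'; apply: hx => // s /hS; exact: hS'. Qed.

Lemma generated_sub (S : G -> Prop) : is_subgroup (generated S).
Proof.
split.
- by move=> H [].
- move=> x y hx hy H hH hS; case: (hH) => _ hM _; apply: hM; [exact: hx|exact: hy].
- move=> x hx H hH hS; case: (hH) => _ _ hV; apply: hV; exact: hx.
Qed.

Lemma generated_min (S H : G -> Prop) x :
  is_subgroup H -> (forall s, S s -> H s) -> generated S x -> H x.
Proof. by move=> hH hS /(_ H hH hS). Qed.

Lemma derived_sub : is_subgroup (@derived G).
Proof. exact: generated_sub. Qed.

Lemma derived_comm (x y : G) : derived (commg x y).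
Proof. by move=> H hH hS; apply: hS; exists x, y. Qed.

End Gen.

Lemma pigeon (T : eqType) (R : seq T) (P : nat -> T -> Prop) :
  (forall i, exists r, r \in R /\ P i r) ->
  exists i j r, [/\ (i < j)%nat, (j <= size R)%nat, P i r & P j r].
Proof.
move=> hP.
pose cr i := proj1_sig (constructive_indefinite_description _ (hP i)).
have crP i : cr i \in R /\ P i (cr i) by rewrite /cr; case: constructive_indefinite_description.
have ltc (i : 'I_(size R).+1) : (index (cr i) R < size R)%nat by rewrite index_mem; case: (crP i).
pose phi (i : 'I_(size R).+1) : 'I_(size R) := Ordinal (ltc i).
have : ~ injective phi.
  by move=> /leq_card; rewrite !card_ord ltnn.
move=> ninj.
have [i ninj'] := not_all_ex_not _ _ ninj.
have [j ninj''] := not_all_ex_not _ _ ninj'.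
have [e ne] := imply_to_and _ _ ninj''.
have eij : cr i = cr j.
  have := congr1 val e; rewrite /= => e'.
  by rewrite -(nth_index (cr i) (proj1 (crP i))) e' nth_index //; case: (crP j).
have hij : i != j by apply/eqP.
case: (ltngtP i j) => [lt|gt|eqij].
- exists i, j, (cr i); split => //; first by rewrite -ltnS.
  by case: (crP i). by rewrite eij; case: (crP j).
- exists j, i, (cr i); split => //; first by rewrite -ltnS.
  by rewrite eij; case: (crP j). by case: (crP i).
- by case: ne; apply: val_inj.
Qed.

Section Part1.
Variable G : groupType.
Implicit Types H : G -> Prop.

Definition Hext H (a : G) := fun x => exists m, H (x * zpow a m).

Lemma Hext_sub H a : is_subgroup H -> (forall x y, H (commg x y)) ->
  is_subgroup (Hext H a).
Proof.
move=> hs hc; setupH hs hc; split.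
- by exists 0%Z; rewrite zpow0 mulg1; exact: H1.
- move=> x y [m hx] [n hy]; exists (m + n)%Z.
  apply/(eqH1 hs hc); move/(eqH1 hs hc): hx => hx; move/(eqH1 hs hc): hy => hy.
  rewrite zpowD.
  have -> : x * y * (zpow a m * zpow a n) = x * (y * zpow a m) * zpow a n by rewrite !mulgA.
  rewrite (eqH_comm hs hc y (zpow a m)) !mulgA hx mul1g hy; reflexivity.
- move=> x [m hx]; exists (- m)%Z.
  apply/(eqH1 hs hc); move/(eqH1 hs hc): hx => hx.
  rewrite zpowN (eqH_comm hs hc) -invgM hx invg1; reflexivity.
Qed.

Lemma finite_index_nil H : is_subgroup H ->
  (forall x, generated (fun y => y \in [::] \/ H y) x) -> finite_index H.
Proof.
move=> hs hg; exists [:: 1] => x; exists 1; first by rewrite inE.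
rewrite invg1 mul1g; apply: generated_min (hg x) => // s [] //.
Qed.


Lemma part1 (s : seq G) : forall H, is_subgroup H -> (forall x y, H (commg x y)) ->
  (forall x, generated (fun y => y \in s \/ H y) x) ->
  finite_index H \/
  exists psi : G -> Z, (forall x y, psi (x * y) = (psi x + psi y)%Z) /\ exists x, psi x <> 0%Z.
Proof.
elim: s => [|a s IH] H hs hc hg.
  by left; exact: finite_index_nil.
have hs' := Hext_sub a hs hc.
have hc' : forall x y, Hext H a (commg x y).
  by move=> x y; exists 0%Z; rewrite zpow0 mulg1.
have hg' : forall x, generated (fun y => y \in s \/ Hext H a y) x.
  move=> x; apply: generated_mono (hg x) => y [|hy].
    rewrite inE => /orP [/eqP -> | ys]; last by left.
    right; exists (Z.opp 1); rewrite zpowN zpow1 mulgV; exact: H1.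
  by right; exists 0%Z; rewrite zpow0 mulg1.
case: (IH _ hs' hc' hg') => [[R hR]|]; last by right.
setupH hs hc.
case: (classic (exists m, m <> 0%Z /\ H (zpow a m))) => [[m [hm0 hm]] | hno].
- left.
  have [p [hp hpH]] : exists p : nat, (0 < p)%nat /\ H (a ^+ p).
    case: (Z.lt_ge_cases m 0) => hm'.
      exists (Z.to_nat (- m)); split; first by apply/ltP; lia.
      rewrite -zpow_nat Z2Nat.id; last by lia.
      by rewrite zpowN; exact: HV.
    exists (Z.to_nat m); split; first by apply/ltP; lia.
    by rewrite -zpow_nat Z2Nat.id //; lia.
  exists [seq r * a ^+ j | r <- R, j <- iota 0 p] => x.
  have [r rR [M hM]] := hR x.
  have hp' : (0 < Z.of_nat p)%Z by move/ltP: hp; lia.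
  have [hj0 hj1] := Z.mod_pos_bound (- M) (Z.of_nat p) hp'.
  pose j := Z.to_nat ((- M) mod (Z.of_nat p)).
  exists (r * a ^+ j).
    apply: allpairs_f => //; rewrite mem_iota /= add0n; apply/ltP; lia.
  apply/(eqH1 hs hc); rewrite invgM -mulgA.
  have e1 : eqH H (r^-1 * x) (zpow a (- M)).
    move/(eqH1 hs hc): hM => hM.
    have := eqH_mul hs hc hM (eqH_refl hs hc (zpow a (- M))).
    by rewrite -mulgA -zpowD Z.add_opp_r Z.sub_diag zpow0 mulg1 mul1g.
  rewrite e1 -zpow_nat -zpowN -zpowD.
  have -> : (- Z.of_nat j + - M = Z.of_nat p * (- M / Z.of_nat p))%Z.
    have := Z.div_mod (- M) (Z.of_nat p) ltac:(lia).
    rewrite /j Z2Nat.id; lia.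
  rewrite zpowM zpow_nat; apply: (proj1 (eqH1 hs hc _)); exact: H_zpow.
- right.
  have uniq : forall y m m', H (y * zpow a m) -> H (y * zpow a m') -> m = m'.
    move=> y m m' h1 h2.
    have := HM hs hc (HV hs hc h1) h2.
    rewrite invgM -mulgA mulKg -zpowN -zpowD => h.
    apply: NNPP => ne; apply: hno; exists (- m + m')%Z; split => //; lia.
  pose Ef := (size R)`!.
  have hpow : forall x, Hext H a (x ^+ Ef).
    move=> x.
    have hR' : forall i, exists r, r \in R /\ Hext H a (r^-1 * x ^+ i).
      by move=> i; have [r rR hr] := hR (x ^+ i); exists r.
    have [i [j [r [lij ljn hi hj]]]] := pigeon hR'.
    have hk : Hext H a (x ^+ (j - i)).
      have := HM hs' hc' (HV hs' hc' hi) hj.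
      have -> : x ^+ j = x ^+ i * x ^+ (j - i) by rewrite -expgnDr subnKC // ltnW.
      by rewrite invgM invgK mulgA mulgK mulKg.
    have kE : (j - i %| Ef)%nat by apply: dvdn_fact; rewrite subn_gt0 lij /=; apply: leq_trans ljn; exact: leq_subr.
    by rewrite -(divnK kE) mulnC expgnA; exact: H_exp.
  pose mo y := epsilon (inhabits 0%Z) (fun m => H (y ^+ Ef * zpow a m)).
  have moP y : H (y ^+ Ef * zpow a (mo y)).
    rewrite /mo; apply: (epsilon_spec (inhabits 0%Z) (fun m => H (y ^+ Ef * zpow a m))).
    exact: hpow.
  exists (fun y => - mo y)%Z; split.
    move=> x y.
    suff -> : mo (x * y) = (mo x + mo y)%Z by lia.
    apply: (uniq _ _ _ (moP (x * y))); apply/(eqH1 hs hc).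
    rewrite zpowD (eqH_expM hs hc x y Ef).
    have -> : x ^+ Ef * y ^+ Ef * (zpow a (mo x) * zpow a (mo y)) =
              x ^+ Ef * (y ^+ Ef * zpow a (mo x)) * zpow a (mo y) by rewrite !mulgA.
    rewrite (eqH_comm hs hc (y ^+ Ef)) !mulgA.
    move/(eqH1 hs hc): (moP x) => ->; rewrite mul1g.
    by move/(eqH1 hs hc): (moP y) => ->; reflexivity.
  exists a.
  have : mo a = (- Z.of_nat Ef)%Z.
    apply: (uniq _ _ _ (moP a)); rewrite -zpow_nat -zpowD Z.add_opp_r Z.sub_diag zpow0; exact: H1.
  have : (0 < Ef)%nat := fact_gt0 _.
  move=> /ltP hE ->; lia.
Qed.

End Part1.



Section Psi.
Variable F : groupType.
Variable psi : F -> Z.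
Hypothesis psiM : forall x y, psi (x * y) = (psi x + psi y)%Z.

Lemma psi1 : psi 1 = 0%Z.
Proof. have := psiM 1 1; rewrite mulg1; lia. Qed.

Lemma psiV x : psi x^-1 = (- psi x)%Z.
Proof. have := psiM x^-1 x; rewrite mulVg psi1; lia. Qed.

Lemma psiZ x n : psi (zpow x n) = (n * psi x)%Z.
Proof.
induction n using Z.peano_ind.
- by rewrite zpow0 psi1.
- rewrite zpowS psiM IHn; lia.
- rewrite zpowP psiM IHn psiV; lia.
Qed.
End Psi.

Lemma min_exists (P : nat -> Prop) n : P n -> exists d, P d /\ forall m, P m -> (d <= m)%nat.
Proof.
elim: n {-2}n (leqnn n) => [|k IH] n hn hP.
  move: hn; rewrite leqn0 => /eqP e; subst n; exists 0%nat; split => //.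
case: (classic (exists m, (m < n)%nat /\ P m)) => [[m [hm hPm]]|no].
  by apply: (IH m) => //; rewrite -ltnS; apply: leq_trans hm hn.
exists n; split => // m hPm; rewrite leqNgt; apply/negP => lt; apply: no; by exists m.
Qed.

Lemma exists_psi (F : groupType) : finitely_generated F -> ~ finite_index (@derived F) ->
  exists (psi : F -> Z) (t : F), (forall x y, psi (x * y) = (psi x + psi y)%Z) /\ psi t = 1%Z.
Proof.
move=> [s hs] nfi.
have hg : forall x, generated (fun y => y \in s \/ derived y) x.
  by move=> x; apply: generated_mono (hs x) => y hy; left.
case: (part1 (derived_sub F) (@derived_comm F) hg) => // [[psi0 [hM [x0 hx0]]]].
pose P n := (0 < n)%nat /\ exists x, psi0 x = Z.of_nat n.
have [n0 hn0] : exists n, P n.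
  case: (Z.lt_ge_cases (psi0 x0) 0) => h.
    exists (Z.to_nat (- psi0 x0)); split; first by apply/ltP; lia.
    by exists x0^-1; rewrite (psiV hM); lia.
  exists (Z.to_nat (psi0 x0)); split; first by apply/ltP; lia.
  by exists x0; lia.
have [d [[hd [t ht]] hmin]] := min_exists hn0.
have hd' : (0 < Z.of_nat d)%Z by move/ltP: hd; lia.
have dvd : forall x, psi0 x = (Z.of_nat d * (psi0 x / Z.of_nat d))%Z.
  move=> x.
  have [r0 r1] := Z.mod_pos_bound (psi0 x) (Z.of_nat d) hd'.
  have hdm := Z.div_mod (psi0 x) (Z.of_nat d) ltac:(lia).
  suff : (psi0 x mod Z.of_nat d = 0)%Z by lia.
  apply: NNPP => ne.
  have : P (Z.to_nat (psi0 x mod Z.of_nat d)).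
    split; first by apply/ltP; lia.
    exists (x * zpow t (- (psi0 x / Z.of_nat d))).
    rewrite hM (psiZ hM) ht Z2Nat.id; lia.
  move=> /hmin /leP; lia.
exists (fun x => psi0 x / Z.of_nat d)%Z, t; split.
  move=> x y; rewrite hM {1}(dvd x) {1}(dvd y) -Z.mul_add_distr_l Z.mul_comm Z.div_mul //; lia.
by rewrite ht Z.div_same //; lia.
Qed.


Lemma inj_surj_bij (A B : Type) (f : A -> B) :
  injective f -> (forall y, exists x, f x = y) -> bijective f.
Proof.
move=> inj sur.
pose g y := proj1_sig (constructive_indefinite_description _ (sur y)).
have gK y : f (g y) = y by rewrite /g; case: constructive_indefinite_description.
exists g => [x|y]; last exact: gK.
by apply: inj; rewrite gK.
Qed.

Lemma glue (A X : Type) (R : X -> X -> Prop)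
  (Rrefl : forall x, R x x) (Rsym : forall x y, R x y -> R y x)
  (Rtrans : forall x y z, R x y -> R y z -> R x z)
  (D : X -> Type) (e : forall x, A * D x -> X) :
  (forall x, injective (e x)) -> (forall x p, R x (e x p)) ->
  (forall x y, R x y -> exists p, e x p = y) -> card_divides A X.
Proof.
move=> einj eR eS.
have Rs : forall {x y}, R x y -> R y x by exact: Rsym.
have Rt : forall {x y z}, R x y -> R y z -> R x z by exact: Rtrans.
pose rep x := epsilon (inhabits x) (R x).
have repR x : R x (rep x) by rewrite /rep; apply: epsilon_spec; exists x.
have repE x y : R x y -> rep x = rep y.
  move=> hxy; rewrite /rep.
  have -> : R x = R y.
    apply: functional_extensionality => z; apply: propositional_extensionality.
    by split => h; [exact: Rt _ _ _ (Rs _ _ hxy) h | exact: Rt _ _ _ hxy h].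
  by rewrite (proof_irrelevance _ (inhabits x) (inhabits y)).
pose C := {r : {x : X | rep x = x} & D (proj1_sig r)}.
exists C, (fun p => e (proj1_sig (projT1 p.2)) (p.1, projT2 p.2)).
apply: inj_surj_bij.
- move=> [a1 [[r1 h1] d1]] [a2 [[r2 h2] d2]] /= E.
  have R12 : R r1 r2.
    apply: (Rt _ _ _ (eR r1 (a1, d1))); rewrite E; exact: (Rs _ _ (eR _ _)).
  have er : r1 = r2 by rewrite -h1 -h2; exact: repE.
  subst r2; have eh : h1 = h2 by apply: proof_irrelevance.
  subst h2; have := einj _ _ _ E; case=> -> ->; by [].
- move=> y.
  have hr : rep (rep y) = rep y by symmetry; apply: repE; exact: repR.
  have [p hp] := eS (rep y) y (Rs _ _ (repR y)).
  by exists (p.1, existT _ (exist _ (rep y) hr) p.2) => /=; case: p hp.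
Qed.



Section Core.
Variables F G : groupType.
Variable psi : F -> Z.
Variable t : F.
Hypothesis psiM : forall x y, psi (x * y) = (psi x + psi y)%Z.
Hypothesis psit : psi t = 1%Z.

Definition ishs (f : F -> G) := monoid_morphism f /\ forall y, exists x, f x = y.
Definition Nf (f : F -> G) (y : G) := exists k, psi k = 0%Z /\ f k = y.
Definition Cen (f : F -> G) (z : G) := forall w, Nf f w -> z * w = w * z.
Definition Zc (f : F -> G) (z : G) := Nf f z /\ Cen f z.

Lemma kdec x : psi (x * zpow t (- psi x)) = 0%Z.
Proof. rewrite psiM (psiZ psiM) psit; lia. Qed.

Section OneF.
Variable f : F -> G.
Hypothesis hf : ishs f.
Let hm := hf.1.
Let g := f t.

Lemma fdec x : f x = f (x * zpow t (- psi x)) * zpow g (psi x).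
Proof. by rewrite (homM hm) (homZ hm) zpowN mulgVK. Qed.

Lemma N1 : Nf f 1.
Proof. by exists 1; rewrite (psi1 psiM) (hom1 hm). Qed.
Lemma NM y1 y2 : Nf f y1 -> Nf f y2 -> Nf f (y1 * y2).
Proof. by move=> [k1 [h1 <-]] [k2 [h2 <-]]; exists (k1 * k2); rewrite psiM h1 h2 (homM hm). Qed.
Lemma NV y : Nf f y -> Nf f y^-1.
Proof. by move=> [k [h <-]]; exists k^-1; rewrite (psiV psiM) h (homV hm). Qed.
Lemma NJ y w : Nf f y -> Nf f (y ^ w).
Proof.
move=> [k [h <-]]; have [x <-] := hf.2 w.
exists (k ^ x); rewrite (homJ hm); split => //.
by rewrite /conjg !psiM (psiV psiM) h; lia.
Qed.
Lemma Nsub : is_subgroup (Nf f).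
Proof. split; [exact: N1 | exact: NM | exact: NV]. Qed.
Lemma Ncomm y1 y2 : Nf f (commg y1 y2).
Proof.
have [x1 <-] := hf.2 y1; have [x2 <-] := hf.2 y2.
exists (commg x1 x2); rewrite (homR hm); split => //.
rewrite /commg /conjg !psiM !(psiV psiM); lia.
Qed.
Lemma derN y : derived y -> Nf f y.
Proof.
move=> hy; apply: (generated_min Nsub _ hy) => s [a [b ->]]; exact: Ncomm.
Qed.

Lemma Cen1 : Cen f 1. Proof. by move=> w _; rewrite mul1g mulg1. Qed.
Lemma CenM a b : Cen f a -> Cen f b -> Cen f (a * b).
Proof. by move=> ha hb w hw; rewrite -mulgA hb // !mulgA ha. Qed.
Lemma CenV a : Cen f a -> Cen f a^-1.
Proof.
move=> ha w hw; apply: (mulgI a); rewrite mulgA mulgV mul1g.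
by rewrite mulgA ha // mulgK.
Qed.
Lemma CenJ a y : Cen f a -> Cen f (a ^ y).
Proof.
move=> ha w hw.
have hw' : Nf f (w ^ y^-1) by apply: NJ.
have := ha _ hw'.
rewrite /conjg invgK => e.
have ev : y^-1 * (a * y) * w = y^-1 * (a * (y * (w * y^-1))) * y by rewrite !mulgA mulgVK.
rewrite ev e; by rewrite !mulgA mulVg mul1g.
Qed.

Lemma ZcM a b : Zc f a -> Zc f b -> Zc f (a * b).
Proof. by move=> [h1 h2] [h3 h4]; split; [exact: NM | exact: CenM]. Qed.
Lemma ZcV a : Zc f a -> Zc f a^-1.
Proof. by move=> [h1 h2]; split; [exact: NV | exact: CenV]. Qed.
Lemma ZcJ a y : Zc f a -> Zc f (a ^ y).
Proof. by move=> [h1 h2]; split; [exact: NJ | exact: CenJ]. Qed.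


Lemma zpowC (x : G) m n : zpow x m * zpow x n = zpow x n * zpow x m.
Proof. by rewrite -!zpowD Z.add_comm. Qed.

Definition u z n := zpow g (- n) * zpow (g * z) n.

Lemma u_cen z : Zc f z -> forall n, Cen f (u z n).
Proof.
move=> hz n; induction n using Z.peano_ind.
- by rewrite /u Z.opp_0 !zpow0 mulg1; exact: Cen1.
- have -> : u z (Z.succ n) = (u z n) ^ g * z.
    rewrite /u; have -> : (- Z.succ n = -1 + - n)%Z by lia.
    rewrite zpowD zpowS.
    have -> : zpow g (-1) = g^-1 by rewrite -[(-1)%Z]/(Z.opp 1) zpowN zpow1.
    by rewrite /conjg !mulgA.
  apply: CenM; [exact: CenJ | exact: hz.2].
- have -> : u z (Z.pred n) = (u z n * z^-1) ^ g^-1.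
    rewrite /u; have -> : (- Z.pred n = 1 + - n)%Z by lia.
    rewrite zpowD zpowP zpow1 /conjg invgK invgM !mulgA.
    by [].
  apply: CenJ; apply: CenM => //; exact: CenV hz.2.
Qed.

Definition tw z x := f x * u z (psi x).

Lemma tw_hom z : Zc f z -> monoid_morphism (tw z).
Proof.
move=> hz; split.
  by rewrite /tw (hom1 hm) (psi1 psiM) /u Z.opp_0 !zpow0 !mulg1.
move=> x y; rewrite /tw psiM (homM hm).
have eu : u z (psi x + psi y) = zpow g (- psi y) * u z (psi x) * zpow (g * z) (psi y).
  rewrite /u Z.opp_add_distr !zpowD !mulgA; congr (_ * _).
  by rewrite zpowC.
have hc : Nf f (f y * zpow g (- psi y)).
  exists (y * zpow t (- psi y)); split; first exact: kdec.
  by rewrite (homM hm) (homZ hm).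
rewrite eu.
have -> : f x * f y * (zpow g (- psi y) * u z (psi x) * zpow (g * z) (psi y)) =
          f x * ((f y * zpow g (- psi y)) * u z (psi x)) * zpow (g * z) (psi y)
  by rewrite !mulgA.
by rewrite -(u_cen hz (psi x) hc) /u !mulgA.
Qed.

Lemma tw_K z k : psi k = 0%Z -> tw z k = f k.
Proof. by move=> hk; rewrite /tw hk /u Z.opp_0 !zpow0 !mulg1. Qed.

Lemma tw_t z : tw z t = g * z.
Proof. by rewrite /tw psit /u zpowN !zpow1 /g mulgA mulgV mul1g. Qed.

Lemma tw_ishs z : Zc f z -> ishs (tw z).
Proof.
move=> hz; split; first exact: tw_hom.
have htm := tw_hom hz.
have [kz [hkz ekz]] := hz.1.
move=> y; have [x <-] := hf.2 y.
exists ((x * zpow t (- psi x)) * zpow (t * kz^-1) (psi x)).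
rewrite (homM htm) (homZ htm) (homM htm t) (homV htm) tw_t (tw_K _ hkz) (tw_K _ (kdec x)).
by rewrite ekz mulgK -fdec.
Qed.

End OneF.

Definition cj (a : G) (h : F -> G) x := h x ^ a.

Lemma cj_ishs a h : ishs h -> ishs (cj a h).
Proof.
move=> [hm hs]; split.
  split; first by rewrite /cj (hom1 hm) conj1g.
  by move=> x y; rewrite /cj (homM hm) conjMg.
move=> y; have [x hx] := hs (y ^ a^-1); exists x; by rewrite /cj hx conjgKV.
Qed.

Lemma hom_ext (f1 f2 : F -> G) : monoid_morphism f1 -> monoid_morphism f2 ->
  (forall k, psi k = 0%Z -> f1 k = f2 k) -> f1 t = f2 t -> f1 = f2.
Proof.
move=> h1 h2 hK ht; apply: functional_extensionality => x.
have -> : x = (x * zpow t (- psi x)) * zpow t (psi x) by rewrite zpowN mulgVK.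
by rewrite (homM h1) (homM h2) (homZ h1) (homZ h2) ht hK // kdec.
Qed.

End Core.



Section Crep.
Variable G : groupType.
Variables B Hs : G -> Prop.
Hypothesis Bsub : is_subgroup B.

Definition crep (x : G) := epsilon (inhabits 1) (fun r => Hs r /\ B (x * r^-1)).

Lemma crep_spec x : Hs x -> Hs (crep x) /\ B (x * (crep x)^-1).
Proof.
move=> hx; rewrite /crep; apply: (epsilon_spec (inhabits 1) (fun r => Hs r /\ B (x * r^-1))).
by exists x; rewrite mulgV; split => //; case: Bsub.
Qed.

Lemma crep_eq x y : B (x * y^-1) -> crep x = crep y.
Proof.
move=> hxy; rewrite /crep.
suff -> : (fun r => Hs r /\ B (x * r^-1)) = (fun r => Hs r /\ B (y * r^-1)) by [].
apply: functional_extensionality => r; apply: propositional_extensionality.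
case: Bsub => _ hM hV.
split => -[hr hb]; split => //.
  by have := hM _ _ (hV _ hxy) hb; rewrite invgM invgK mulgA mulgVK.
by have := hM _ _ hxy hb; rewrite mulgA mulgVK.
Qed.

Lemma crep_idem x : Hs x -> crep (crep x) = crep x.
Proof.
move=> hx; symmetry; apply: crep_eq; have [_ hb] := crep_spec hx.
by case: Bsub => _ _ hV; have := hV _ hb; rewrite invgM invgK.
Qed.
End Crep.

Lemma sh_eq (F G : groupType) (a b : SurjHom F G) : proj1_sig a = proj1_sig b -> a = b.
Proof.
case: a b => [fa pa] [fb pb] /= e; subst fb.
by rewrite (proof_irrelevance _ pa pb).
Qed.

Lemma ds_eq (G : groupType) (a b : DerivedSet G) : proj1_sig a = proj1_sig b -> a = b.
Proof.
case: a b => [fa pa] [fb pb] /= e; subst fb.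
by rewrite (proof_irrelevance _ pa pb).
Qed.

Section Main.
Variables F G : groupType.
Variable psi : F -> Z.
Variable t : F.
Hypothesis psiM : forall x y, psi (x * y) = (psi x + psi y)%Z.
Hypothesis psit : psi t = 1%Z.

Local Notation X := (SurjHom F G).
Local Notation N f := (Nf psi (proj1_sig f)).
Local Notation ZC f := (Zc psi (proj1_sig f)).

Lemma hsP (f : X) : ishs (proj1_sig f).
Proof. exact: proj2_sig f. Qed.

Definition Rel (f f' : X) := exists n m, [/\ N f n, N f m,
  (forall k, psi k = 0%Z -> proj1_sig f' k = proj1_sig f k ^ n) &
  proj1_sig f' t = m * proj1_sig f t].

Lemma Rel_N f f' : Rel f f' -> forall y, N f' y <-> N f y.
Proof.
move=> [n [m [hn hm hK ht]]] y; split.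
  by move=> [k [hk <-]]; rewrite hK //; apply: (NJ psiM (hsP f)); exists k.
move=> [k [hk <-]].
have -> : proj1_sig f k = proj1_sig f' k ^ n^-1 by rewrite hK // conjgK.
by apply: (NJ psiM (hsP f')); exists k.
Qed.

Lemma Rel_refl f : Rel f f.
Proof.
exists 1, 1; split; try exact: (N1 psiM (hsP f)).
  by move=> k _; rewrite conjg1.
by rewrite mul1g.
Qed.

Lemma Rel_sym f f' : Rel f f' -> Rel f' f.
Proof.
move=> hR; have hN := Rel_N hR.
move: hR => [n [m [hn hm hK ht]]].
exists n^-1, m^-1; split.
- by apply/hN; apply: (NV psiM (hsP f)).
- by apply/hN; apply: (NV psiM (hsP f)).
- by move=> k hk; rewrite hK // conjgK.
- by rewrite ht mulKg.
Qed.

Lemma Rel_trans f f' f'' : Rel f f' -> Rel f' f'' -> Rel f f''.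
Proof.
move=> hR1 hR2; have hN := Rel_N hR1.
move: hR1 hR2 => [n [m [hn hm hK ht]]] [n' [m' [hn' hm' hK' ht']]].
exists (n * n'), (m' * m); split.
- by apply: (NM psiM (hsP f)) => //; apply/hN.
- by apply: (NM psiM (hsP f)) => //; apply/hN.
- by move=> k hk; rewrite hK' // hK // conjgM.
- by rewrite ht' ht mulgA.
Qed.

Section ForF.
Variable f : X.
Local Notation f0 := (proj1_sig f).
Local Notation g := (f0 t).
Let hf := hsP f.

Lemma Zc_sub : is_subgroup (Zc psi f0).
Proof.
split.
- split; [exact: (N1 psiM hf) | exact: Cen1].
- by move=> x y; apply: (ZcM psiM hf).
- by move=> x; apply: (ZcV psiM hf).
Qed.

Definition crZ := crep (Zc psi f0) (Nf psi f0).
Definition crA := crep (@derived G) (Nf psi f0).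

Definition Dt := {r : G | Nf psi f0 r /\ crA r = r}.

Lemma hn_of (p : DerivedSet G * Dt) : Nf psi f0 (proj1_sig p.1 * proj1_sig p.2).
Proof.
apply: (NM psiM hf); first exact: (derN psiM hf (proj2_sig p.1)).
exact: (proj1 (proj2_sig p.2)).
Qed.

Lemma crZ_spec n : Nf psi f0 n -> Nf psi f0 (crZ n) /\ Zc psi f0 (n * (crZ n)^-1).
Proof. by move=> hn; have := @crep_spec G _ (Nf psi f0) Zc_sub n hn. Qed.

Definition efun (n : G) := cj (crZ n) (tw psi t f0 (n * (crZ n)^-1)).

Lemma efun_ok n : Nf psi f0 n -> ishs (efun n).
Proof.
move=> hn; apply: cj_ishs; apply: (tw_ishs psiM psit hf).
exact: (crZ_spec hn).2.
Qed.

Definition eF (p : DerivedSet G * Dt) : X :=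
  exist _ (efun (proj1_sig p.1 * proj1_sig p.2)) (efun_ok (hn_of p)).


Lemma crZ_eq x y : Zc psi f0 (x * y^-1) -> crZ x = crZ y.
Proof. exact: (@crep_eq G _ (Nf psi f0) Zc_sub x y). Qed.
Lemma crA_eq x y : derived (x * y^-1) -> crA x = crA y.
Proof. exact: (@crep_eq G _ (Nf psi f0) (derived_sub G) x y). Qed.
Lemma crA_spec n : Nf psi f0 n -> Nf psi f0 (crA n) /\ derived (n * (crA n)^-1).
Proof. by move=> hn; have := @crep_spec G _ (Nf psi f0) (derived_sub G) n hn. Qed.

Lemma eF_R p : Rel f (eF p).
Proof.
rewrite /Rel /eF /=; set n := _ * _.
have hn : Nf psi f0 n := hn_of p.
have [hr ha] := crZ_spec hn.
set r := crZ n in hr ha *; set a := n * r^-1 in ha *.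
exists r, (r^-1 * (a * r) ^ g^-1); split => //.
- apply: (NM psiM hf); first exact: (NV psiM hf).
  apply: (NJ psiM hf); apply: (NM psiM hf) => //; exact: ha.1.
- by move=> k hk; rewrite /efun -/r -/a /cj tw_K.
- rewrite /efun -/r -/a /cj (tw_t psit) /conjg invgK !mulgA.
  by rewrite !mulgVK.
Qed.

Lemma eF_inj : injective eF.
Proof.
move=> [[c1 hc1] [d1 [hd1 fd1]]] [[c2 hc2] [d2 [hd2 fd2]]] E.
have E' := congr1 (@proj1_sig _ _) E; rewrite /eF /= in E'.
have hn1 : Nf psi f0 (c1 * d1) by apply: (NM psiM hf) => //; exact: (derN psiM hf).
have hn2 : Nf psi f0 (c2 * d2) by apply: (NM psiM hf) => //; exact: (derN psiM hf).
have [hr1 ha1] := crZ_spec hn1; have [hr2 ha2] := crZ_spec hn2.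
move: E'; rewrite /efun.
set r1 := crZ (c1 * d1) in hr1 ha1 *; set r2 := crZ (c2 * d2) in hr2 ha2 *.
set a1 := c1 * d1 * r1^-1 in ha1 *; set a2 := c2 * d2 * r2^-1 in ha2 *.
move=> E'.
have eK : forall w, Nf psi f0 w -> w ^ r1 = w ^ r2.
  move=> w [k [hk <-]].
  have := congr1 (fun h => h k) E'; by rewrite /cj !tw_K.
have hc : Zc psi f0 (r2 * r1^-1).
  split; first by apply: (NM psiM hf) => //; exact: (NV psiM hf).
  move=> w hw.
  have : w ^ (r2 * r1^-1) = w by rewrite conjgM -eK // conjgK.
  by move/eqP; rewrite conjg_fix => /commgP.
have er : r1 = r2.
  have e1 : crZ r1 = r1 by rewrite /r1 /crZ (crep_idem Zc_sub hn1).
  have e2 : crZ r2 = r2 by rewrite /r2 /crZ (crep_idem Zc_sub hn2).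
  by rewrite -e1 -e2; symmetry; apply: crZ_eq.
have ea : a1 = a2.
  have := congr1 (fun h => h t) E'; rewrite /cj !(tw_t psit) er.
  by move/conjg_inj/mulgI.
have en : c1 * d1 = c2 * d2.
  by rewrite -(mulgVK r1 (c1 * d1)) -(mulgVK r2 (c2 * d2)) -/a1 -/a2 ea er.
have ed : d1 = d2.
  rewrite -fd1 -fd2; apply: crA_eq.
  have -> : d1 * d2^-1 = c1^-1 * c2.
    apply: (mulgI c1); rewrite mulgA en mulgA mulgK.
    by rewrite mulgV mul1g.
  case: (derived_sub G) => _ hM hV; apply: hM => //; exact: hV.
subst d2.
have ec : c1 = c2 by apply: (mulIg d1).
subst c2.
by rewrite (proof_irrelevance _ hc1 hc2) (proof_irrelevance _ fd1 fd2)
           (proof_irrelevance _ hd1 hd2).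
Qed.

Lemma eF_sur f' : Rel f f' -> exists p, eF p = f'.
Proof.
move=> [n [m [hn hm hK ht]]].
have hf' := hsP f'.
set f1 := proj1_sig f' in hK ht hf' *.
pose h := cj (n^-1) f1.
have hh : ishs h := cj_ishs _ hf'.
have hK' : forall k, psi k = 0%Z -> h k = f0 k by move=> k hk; rewrite /h /cj hK // conjgK.
pose w := g^-1 * h t.
have hw_t : h t = g * w by rewrite /w mulVKg.
have ew : w = (n * m) ^ g * n^-1 by rewrite /w /h /cj ht /conjg invgK !mulgA.
clearbody w.
have hNw : Nf psi f0 w.
  rewrite ew; apply: (NM psiM hf); last exact: (NV psiM hf).
  apply: (NJ psiM hf); exact: (NM psiM hf).
have hCw : Cen psi f0 w.
  move=> w' [k [hk <-]].
  pose x := k ^ t^-1.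
  have hx : psi x = 0%Z by rewrite /x /conjg !psiM !(psiV psiM) hk; lia.
  have e1 := hK' _ hx.
  rewrite /x (homJ hh.1) (homJ hf.1) !(homV hh.1) !(homV hf.1) hw_t hK' // in e1.
  have e2 : f0 k ^ w^-1 = f0 k.
    have := congr1 (fun y => y ^ g) e1.
    by rewrite conjgKV -conjgM invgM mulgVK.
  move: e2; rewrite /conjg invgK => e2.
  by rewrite -[in RHS]e2 -(mulgA w) mulgVK.
have hZw : Zc psi f0 w by split.
have eh : h = tw psi t f0 w.
  apply: (hom_ext psiM psit hh.1 (tw_ishs psiM psit hf hZw).1).
    by move=> k hk; rewrite hK' // tw_K.
  by rewrite hw_t (tw_t psit).
have ef1 : f1 = cj n (tw psi t f0 w).
  apply: functional_extensionality => y; by rewrite -eh /h /cj conjgKV.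
have [hr ha] := crZ_spec hn.
set r := crZ n in hr ha *; set a := n * r^-1 in ha *.
pose w2 := g^-1 * (g * w) ^ a.
have hZw2 : Zc psi f0 w2.
  have -> : w2 = (a^-1) ^ g * (w * a) by rewrite /w2 /conjg !mulgA.
  apply: (ZcM psiM hf); first by apply: (ZcJ psiM hf); exact: (ZcV psiM hf).
  exact: (ZcM psiM hf).
have e2 : cj a (tw psi t f0 w) = tw psi t f0 w2.
  apply: (hom_ext psiM psit (cj_ishs _ (tw_ishs psiM psit hf hZw)).1
                          (tw_ishs psiM psit hf hZw2).1).
    move=> k hk; rewrite /cj !tw_K // /conjg.
    by rewrite -(ha.2 (f0 k)) ?mulKg //; exists k.
  by rewrite /cj !(tw_t psit) /w2 mulVKg.
have e3 : f1 = cj r (tw psi t f0 w2).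
  rewrite ef1 -e2; apply: functional_extensionality => y.
  have -> : n = a * r by rewrite /a mulgVK.
  by rewrite /cj conjgM.
pose n2 := w2 * r.
have hN2 : Nf psi f0 n2 by apply: (NM psiM hf) => //; exact: hZw2.1.
have crn2 : crZ n2 = r.
  have -> : crZ n2 = crZ r by apply: crZ_eq; rewrite /n2 mulgK.
  by rewrite /r /crZ (crep_idem Zc_sub hn).
have [hNd hc] := crA_spec hN2.
have fd : crA (crA n2) = crA n2 by rewrite /crA (crep_idem (derived_sub G) hN2).
exists (exist _ (n2 * (crA n2)^-1) hc, exist _ (crA n2) (conj hNd fd)).
apply: sh_eq => /=.
rewrite /efun mulgVK crn2 /n2 mulgK. by rewrite -e3.
Qed.

End ForF.
End Main.

Theorem mainTheorem4 (F G : groupType) :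
  finitely_generated F ->
  ~ finite_index (@derived F) ->
  card_divides (DerivedSet G) (SurjHom F G).
Proof.
move=> hfg hfi.
have [psi [t [psiM psit]]] := exists_psi hfg hfi.
apply: (@glue _ _ (@Rel F G psi t)).
- exact: Rel_refl psiM.
- exact: Rel_sym psiM.
- exact: Rel_trans psiM.
- exact: eF_inj psiM psit.
- exact: eF_R psiM psit.
- exact: eF_sur psiM psit.
Qed.
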